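(* Let $A$ be a finite set with $q:=|A|\ge 2$ and let $n\ge 2$ be an integer. (a) Unless $q=n=2$, the symmetric group $\mathrm{Sym}(A^n)$ is generated by $n$ instructions. (b) If $q\ge 3$, then the alternating group $\mathrm{Alt}(A^n)$ is generated by $n$ instructions (i.e. there exist $n$ instructions, each an even permutation of $A^n$, which generate $\mathrm{Alt}(A^n)$).
   Context: Elements of $A^n$ are written $x=(x_1,\ldots,x_n)$. Any $f\in\mathrm{Sym}(A^n)$ is written $f(x)=(f_1(x),\ldots,f_n(x))$ with coordinate functions $f_i:A^n\to A$; the $i$-th coordinate function is trivial if $f_i(x)=x_i$ for all $x$. An instruction is a permutation $g$ of $A^n$ with at most one nontrivial coordinate function, i.e. $g(x)=(x_1,\ldots,x_{j-1},g_j(x),x_{j+1},\ldots,x_n)$ for some $j$ (it is said to update register $j$); by convention the identity is also an instruction. *)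

(* Defs.v *)
From mathcomp Require Import all_boot all_fingroup all_solvable.
Set Implicit Arguments. Unset Strict Implicit. Unset Printing Implicit Defensive.


Definition instruction (A : finType) (n : nat) (g : {perm {ffun 'I_n -> A}}) : Prop :=
  exists j : 'I_n, forall (x : {ffun 'I_n -> A}) (i : 'I_n), i != j -> g x i = x i.

(* Main.v *)
Require Import Defs.
From mathcomp Require Import all_boot all_fingroup all_solvable zify.
Set Implicit Arguments. Unset Strict Implicit. Unset Printing Implicit Defensive.

Section Frameworks.
Variable T : finType.
Implicit Types (x y z u v a b c : T).
Local Open Scope group_scope.

Definition c3 x y z : {perm T} := tperm x y * tperm x z.

Lemma tpermE x y z : tperm x y z = if z == x then y else if z == y then x else z.
Proof. by case: tpermP => [->|->|/eqP/negbTE-> /eqP/negbTE->]; rewrite ?eqxx // ; case: eqP. Qed.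

Ltac tsolve := let w := fresh "w" in apply/permP => w; rewrite ?permM ?perm1 ?tpermE;
  repeat match goal with
  | |- context [?u == ?v] => is_var u; is_var v;
      case: (eqVneq u v) => [?|/eqP ?]; [subst|]; rewrite ?eqxx /=
  end; try congruence.

Lemma c3_rot a b c : a != b -> b != c -> a != c -> c3 a b c = c3 b c a.
Proof. move=> /eqP ab /eqP bc /eqP ac; rewrite /c3; tsolve. Qed.

Lemma c3J a b c s : c3 a b c ^ s = c3 (s a) (s b) (s c).
Proof. by rewrite /c3 conjMg !tpermJ. Qed.

Lemma c3V a b c : (c3 a b c)^-1 = tperm a c * tperm a b.
Proof. by rewrite /c3 invMg !tpermV. Qed.

Lemma odd_c3 a b c : a != b -> a != c -> odd_perm (c3 a b c) = false.
Proof. by move=> ab ac; rewrite /c3 odd_mul_tperm odd_tperm ab ac. Qed.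

Variable G : {group {perm T}}.

Section SymF.
Variable p : T.
Definition SX := [set y | tperm p y \in G].
Lemma SX_p : p \in SX. Proof. by rewrite inE tperm1 group1. Qed.

Lemma tperm_SX u v : u \in SX -> v \in SX -> tperm u v \in G.
Proof.
rewrite !inE => Hu Hv.
case: (eqVneq u p) => [e|up]; first by rewrite e.
case: (eqVneq v p) => [e|vp]; first by rewrite e tpermC.
case: (eqVneq u v) => [->|uv]; first by rewrite tperm1 group1.
have -> : tperm u v = (tperm p v) ^ (tperm p u).
  by rewrite tpermJ tpermL tpermD // eq_sym.
by rewrite groupJ.
Qed.

Lemma SX_prop g x : g \in G -> x \in SX -> g x \in SX ->
  forall y, y \in SX -> g y \in SX.
Proof.
move=> gG xS gxS y yS.
have H1 : tperm (g x) (g y) \in G by rewrite -tpermJ groupJ // tperm_SX.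
rewrite inE.
case: (eqVneq (g x) p) => [e|gxp]; first by rewrite -e.
case: (eqVneq (g y) p) => [->|gyp]; first by rewrite tperm1 group1.
case: (eqVneq (g x) (g y)) => [<-|gxy]; first by rewrite inE in gxS.
have -> : tperm p (g y) = (tperm (g x) (g y)) ^ (tperm p (g x)).
  by rewrite tpermJ tpermR tpermD // eq_sym.
by rewrite groupJ //; move: gxS; rewrite inE.
Qed.

Lemma SX_final : (forall y, y \in SX) -> G = [set: {perm T}] :> {set _}.
Proof.
move=> H; apply/eqP; rewrite eqEsubset subsetT /= -(gen_tperm p) gen_subG.
by apply/subsetP => s /imsetP [y _ ->]; have := H y; rewrite inE.
Qed.
End SymF.

Section AltF.
Variables p p' : T.
Hypothesis pp' : p != p'.
Definition AY := p |: [set y | c3 p p' y \in G].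

Lemma AY_p : p \in AY. Proof. by rewrite !inE eqxx. Qed.
Lemma AY_p' : p' \in AY.
Proof. by rewrite !inE /c3 tperm2 group1 orbT. Qed.

Lemma AY_c3 y : y \in AY -> y != p -> c3 p p' y \in G.
Proof. by rewrite !inE => /orP [/eqP->|//]; rewrite eqxx. Qed.

Lemma AY_D u v : u \in AY -> v \in AY -> u != p -> v != p ->
  tperm p u * tperm p v \in G.
Proof.
move=> uA vA up vp.
have := groupM (groupVr (AY_c3 uA up)) (AY_c3 vA vp).
by rewrite c3V /c3 -mulgA (mulgA (tperm p p')) tperm2 mul1g.
Qed.

Lemma AY_closed a b c : a \in AY -> b \in AY -> c \in AY ->
  a != b -> b != c -> a != c -> c3 a b c \in G.
Proof.
move=> aA bA cA ab bc ac.
case: (eqVneq a p) => [ap|ap].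
  by subst a; rewrite /c3 AY_D // eq_sym.
case: (eqVneq b p) => [bp|bp].
  by subst b; rewrite c3_rot // /c3 AY_D // eq_sym.
case: (eqVneq c p) => [cp|cp].
  subst c; rewrite (c3_rot ab bc ac) (c3_rot bc _ _) 1?eq_sym //.
  by rewrite /c3 AY_D.
have -> : c3 a b c = (tperm p a * tperm p b) * (tperm p c * tperm p a).
  move: ab bc ac ap bp cp => /eqP ab /eqP bc /eqP ac /eqP ap /eqP bp /eqP cp.
  rewrite /c3; tsolve.
by rewrite groupM // AY_D.
Qed.

Lemma AY_extract u v z : u \in AY -> v \in AY -> u != v -> z != u -> z != v ->
  c3 u v z \in G -> z \in AY.
Proof.
move=> uA vA uv zu zv H.
have p'p : p' != p by rewrite eq_sym.
case: (eqVneq z p) => [->|zp]; first exact: AY_p.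
have key : forall v', v' \in AY -> v' != p -> z != v' ->
    tperm p v' * tperm p z \in G -> z \in AY.
  move=> v' v'A v'p zv' K.
  rewrite !inE; apply/orP; right.
  have := groupM (AY_D AY_p' v'A p'p v'p) K.
  by rewrite -mulgA (mulgA (tperm p v')) tperm2 mul1g.
case: (eqVneq u p) => [up|up].
  by subst u; apply: (key v vA _ zv H); rewrite eq_sym.
case: (eqVneq v p) => [vp|vp].
  subst v; rewrite c3_rot // 1?eq_sym // in H.
  have := groupM H (AY_D uA AY_p' up p'p).
  rewrite /c3 -mulgA (mulgA (tperm p u)) tperm2 mul1g => K.
  have := groupVr K; rewrite invMg !tpermV => K'.
  rewrite !inE; apply/orP; right; exact: K'.
have W : (c3 p u v)^-1 \in G by rewrite groupV /c3 AY_D.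
have := groupJ H W.
rewrite c3J.
have e1 : (c3 p u v)^-1 u = p.
  by apply: (canLR (permK _)); rewrite /c3 permM tpermL tpermD // eq_sym.
have e2 : (c3 p u v)^-1 v = u.
  by apply: (canLR (permK _)); rewrite /c3 permM tpermR tpermL.
have pz : p != z by rewrite eq_sym.
have uz : u != z by rewrite eq_sym.
have vz : v != z by rewrite eq_sym.
have e3 : (c3 p u v)^-1 z = z.
  by apply: (canLR (permK _)); rewrite /c3 permM !tpermD.
by rewrite e1 e2 e3 => K; apply: (key u uA up zu K).
Qed.

Lemma AY_prop g a b : g \in G -> a \in AY -> b \in AY -> a != b ->
  g a \in AY -> g b \in AY -> forall y, y \in AY -> g y \in AY.
Proof.
move=> gG aA bA ab gaA gbA y yA.
case: (eqVneq y a) => [->//|ya]; case: (eqVneq y b) => [->//|yb].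
have H : c3 a b y \in G by apply: AY_closed; rewrite // eq_sym.
have := groupJ H gG; rewrite c3J => K.
by apply: (AY_extract gaA gbA _ _ _ K); rewrite (inj_eq perm_inj).
Qed.

Lemma AY_final : (forall y, y \in AY) -> 'Alt_T \subset G.
Proof.
move=> Hall.
pose H := <<[set c3 p p' y | y in [set y | y != p]]>>%G.
have HG : H \subset G.
  rewrite gen_subG; apply/subsetP => s /imsetP [y]; rewrite inE => yp ->.
  exact: AY_c3.
have HA : H \subset 'Alt_T.
  rewrite gen_subG; apply/subsetP => s /imsetP [y]; rewrite inE => yp ->.
  by rewrite Alt_even odd_c3 // eq_sym.
have key : forall s, (s \in H) || (s * tperm p p' \in H).
  move=> s; have : s \in <<[set tperm p y | y in T]>> by rewrite gen_tperm inE.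
  case/gen_prodgP => m [c Hc ->].
  elim: m c Hc => [|m IH] c Hc; first by rewrite big_ord0 group1.
  rewrite big_ord_recr /=.
  have /imsetP [y _ cy] := Hc ord_max.
  have /orP [K|K] := IH (fun i => c (widen_ord (leqnSn m) i)) (fun i => Hc _).
  - case: (eqVneq y p) => [yp|yp].
      by rewrite cy yp tperm1 mulg1 K.
    apply/orP; right; rewrite cy -mulgA.
    have -> : tperm p y * tperm p p' = (c3 p p' y)^-1 by rewrite c3V.
    by rewrite groupM // groupV mem_gen //; apply/imsetP; exists y; rewrite ?inE.
  - case: (eqVneq y p) => [yp|yp].
      by rewrite cy yp tperm1 mulg1 K orbT.
    apply/orP; left; rewrite cy.
    have -> : \prod_(i < m) c (widen_ord (leqnSn m) i) =
       (\prod_(i < m) c (widen_ord (leqnSn m) i) * tperm p p') * tperm p p'.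
      by rewrite -mulgA tperm2 mulg1.
    by rewrite -mulgA groupM // mem_gen //; apply/imsetP; exists y; rewrite ?inE.
apply/subsetP => s sA.
have /orP [K|K] := key s; first exact: (subsetP HG).
have := subsetP HA _ K; rewrite !Alt_even odd_permM odd_tperm pp' in sA *.
by rewrite addbT sA.
Qed.
End AltF.
End Frameworks.

Section Instr.
Variables (A : finType) (n : nat) (r0 : A).
Local Notation T := {ffun 'I_n -> A}.
Local Open Scope group_scope.

Definition upd (x : T) (j : 'I_n) (b : A) : T := [ffun i => if i == j then b else x i].

Lemma upd_same x j b : upd x j b j = b.
Proof. by rewrite ffunE eqxx. Qed.
Lemma upd_other x j b i : i != j -> upd x j b i = x i.
Proof. by rewrite ffunE => /negbTE ->. Qed.
Lemma upd_upd x j b c : upd (upd x j b) j c = upd x j c.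
Proof. by apply/ffunP => i; rewrite !ffunE; case: eqP. Qed.
Lemma upd_id x j : upd x j (x j) = x.
Proof. by apply/ffunP => i; rewrite !ffunE; case: eqP => [->|]. Qed.
Lemma upd_inj x j : injective (upd x j).
Proof. by move=> b c /ffunP /(_ j); rewrite !upd_same. Qed.

Definition instf (j : 'I_n) (F : T -> {perm A}) (x : T) : T :=
  upd x j (F (upd x j r0) (x j)).

Lemma instf_inj j F : injective (instf j F).
Proof.
move=> x y; rewrite /instf => E.
have E1 : upd x j r0 = upd y j r0 by move: (congr1 (fun z : T => upd z j r0) E); rewrite !upd_upd.
move: (congr1 (fun z : T => z j) E); rewrite !upd_same E1 => /perm_inj E2.
by rewrite -(upd_id x j) -(upd_id y j) E2 -(upd_upd x j r0) E1 upd_upd upd_id.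
Qed.

Definition inst j F : {perm T} := perm (@instf_inj j F).

Lemma instE j F x : inst j F x = upd x j (F (upd x j r0) (x j)).
Proof. by rewrite permE. Qed.

Lemma inst_other j F x i : i != j -> inst j F x i = x i.
Proof. by move=> ij; rewrite instE upd_other. Qed.

Lemma inst_ext j F G : (forall c, c j = r0 -> F c = G c) -> inst j F = inst j G.
Proof. by move=> H; apply/permP => x; rewrite !instE H ?upd_same. Qed.

Lemma instM j F G : inst j F * inst j G = inst j (fun c => F c * G c).
Proof.
by apply/permP => x; rewrite permM !instE !upd_upd upd_same permM.
Qed.

Lemma inst1 j : inst j (fun _ => 1) = 1.
Proof. by apply/permP => x; rewrite instE perm1 upd_id perm1. Qed.

Lemma instX j F m : inst j F ^+ m = inst j (fun c => F c ^+ m).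
Proof.
elim: m => [|m IH]; first by rewrite expg0; apply/permP => x; rewrite instE !perm1 upd_id.
by rewrite expgS IH instM; apply/permP => x; rewrite !instE expgS.
Qed.

Lemma inst_prod j (I : Type) (s : seq I) (P : pred I) (F : I -> T -> {perm A}) :
  \prod_(i <- s | P i) inst j (F i) = inst j (fun c => \prod_(i <- s | P i) F i c).
Proof.
elim: s => [|i s IH].
  by rewrite !big_nil; apply/permP => x; rewrite instE big_nil !perm1 upd_id.
rewrite big_cons IH; case Pi: (P i); rewrite ?instM; apply/permP => x;
  by rewrite !instE big_cons Pi.
Qed.

Definition Rj (j : 'I_n) := [set c : T | c j == r0].
Definition liftp j (c : T) (pi : {perm A}) :=
  inst j (fun r => if r == c then pi else 1).

Lemma rep_eq (x : T) j (c : T) : c j = r0 -> (upd x j r0 == c) = (x == upd c j (x j)).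
Proof.
move=> cj; apply/eqP/eqP => [<-|->]; first by rewrite upd_upd upd_id.
by rewrite upd_upd -cj upd_id.
Qed.

Lemma lift_tperm j (c : T) a b : c j = r0 ->
  liftp j c (tperm a b) = tperm (upd c j a) (upd c j b).
Proof.
move=> cj; apply/permP => x; rewrite instE.
case: (eqVneq (upd x j r0) c) => [E|E].
  have Ex : x = upd c j (x j) by apply/eqP; rewrite -rep_eq // E.
  by rewrite {1}Ex upd_upd {2}Ex (inj_tperm _ _ _ (@upd_inj c j)).
rewrite perm1 upd_id tpermD //; apply/eqP => Ex; move/eqP: E; apply;
  by rewrite -Ex upd_upd -cj upd_id.
Qed.

Lemma odd_lift j (c : T) pi : c j = r0 -> odd_perm (liftp j c pi) = odd_perm pi.
Proof.
move=> cj; case: (prod_tpermP pi) => ts -> dts.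
have -> : liftp j c (\prod_(t <- ts) tperm t.1 t.2) =
    \prod_(t <- ts) liftp j c (tperm t.1 t.2).
  rewrite /liftp inst_prod; apply/permP => x; rewrite !instE.
  by case: eqP => // _; rewrite big1.
under eq_bigr do rewrite lift_tperm //.
rewrite -(big_map (fun t => (upd c j t.1, upd c j t.2)) xpredT
   (fun t => tperm t.1 t.2)).
rewrite !odd_perm_prod ?size_map //.
rewrite all_map; apply/allP => t tin /=.
have := allP dts t tin; rewrite /= => ne; apply/negP => /eqP/upd_inj/eqP.
by apply/negP.
Qed.

Lemma prod_single (I : eqType) (s : seq I) (P : pred I) (x : I) (f : I -> {perm A}) :
  uniq s -> x \in s -> P x -> \prod_(i <- s | P i) (if x == i then f i else 1) = f x.
Proof.
move=> + + Px; elim: s => //= i s IH /andP [nis us]; rewrite inE big_cons.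
case: (eqVneq x i) => [xi _|ne /= xs].
  subst i; rewrite Px big1_seq ?mulg1 // => k /andP [_ ks].
  by case: (eqVneq x k) => // e; move: nis; rewrite e ks.
by rewrite (IH us xs); case: (P i) => //; rewrite mul1g.
Qed.

Lemma odd_inst j F :
  odd_perm (inst j F) = \big[addb/false]_(c in Rj j) odd_perm (F c).
Proof.
have -> : inst j F = \prod_(c in Rj j) liftp j c (F c).
  rewrite /liftp inst_prod; apply/permP => x; rewrite !instE.
  rewrite (@prod_single _ _ (fun i => i \in Rj j)) ?index_enum_uniq ?mem_index_enum //.
  by rewrite inE upd_same.
rewrite (big_morph (@odd_perm _) (@odd_permM _) (@odd_perm1 _)); apply: eq_bigr => c.
by rewrite inE => /eqP; apply: odd_lift.
Qed.

End Instr.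

Section Cyc.
Variables (A : finType) (d : A).
Local Notation q := #|A|.
Local Open Scope group_scope.

Definition av k := nth d (enum A) k.
Definition idx (a : A) := index a (enum A).
Lemma idx_lt a : idx a < q.
Proof. by rewrite cardE index_mem mem_enum. Qed.
Lemma av_idx a : av (idx a) = a.
Proof. by rewrite /av /idx nth_index // mem_enum. Qed.
Lemma idx_av k : k < q -> idx (av k) = k.
Proof. by move=> kq; rewrite /idx /av index_uniq -?cardE ?enum_uniq. Qed.
Lemma av_inj k l : k < q -> l < q -> av k = av l -> k = l.
Proof. by move=> kq lq E; rewrite -(idx_av kq) -(idx_av lq) E. Qed.

Definition cycn lo k := if k < lo then k else if k.+1 < q then k.+1 else lo.
Lemma cycn_lt lo k : k < q -> cycn lo k < q.
Proof. move=> kq; rewrite /cycn; case: (ltnP k lo) => //; case: (ltnP k.+1 q) => //; lia. Qed.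
Lemma cycn_inj lo k l : k < q -> l < q -> cycn lo k = cycn lo l -> k = l.
Proof.
move=> kq lq; rewrite /cycn; case: (ltnP k lo); case: (ltnP l lo);
  case: (ltnP k.+1 q); case: (ltnP l.+1 q); lia.
Qed.

Definition cycf lo a := av (cycn lo (idx a)).
Lemma cycf_inj lo : injective (cycf lo).
Proof.
move=> a b /av_inj E; rewrite -(av_idx a) -(av_idx b); congr av.
by apply: (@cycn_inj lo); rewrite ?idx_lt // E // cycn_lt // idx_lt.
Qed.
Definition cyc lo : {perm A} := perm (@cycf_inj lo).
Lemma cycE lo a : cyc lo a = av (cycn lo (idx a)).
Proof. by rewrite permE. Qed.

Lemma cyc_closed lo (B : pred A) b0 : lo < q -> lo <= idx b0 -> B b0 ->
  (forall a, B a -> B (cyc lo a)) -> forall a, lo <= idx a -> B a.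
Proof.
move=> loq lob0 Bb0 HB.
have step k : lo <= k -> k.+1 < q -> B (av k) -> B (av k.+1).
  move=> lok kq Bk; have := HB _ Bk; rewrite cycE idx_av; last by lia.
  by rewrite /cycn ltnNge lok /= kq.
have P1 m : idx b0 + m < q -> B (av (idx b0 + m)).
  elim: m => [|m IH] h; first by rewrite addn0 av_idx.
  by rewrite addnS; apply: step; [lia|lia|apply: IH; lia].
have Blo : B (av lo).
  have h : idx b0 + (q.-1 - idx b0) < q by have := idx_lt b0; lia.
  have := HB _ (P1 _ h); rewrite cycE idx_av // /cycn.
  have -> : (idx b0 + (q.-1 - idx b0) < lo) = false by have := idx_lt b0; lia.
  by have -> : ((idx b0 + (q.-1 - idx b0)).+1 < q) = false by have := idx_lt b0; lia.
have P3 m : lo + m < q -> B (av (lo + m)).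
  elim: m => [|m IH] h; first by rewrite addn0.
  by rewrite addnS; apply: step; [lia|lia|apply: IH; lia].
move=> a loa; rewrite -(av_idx a).
have -> : idx a = lo + (idx a - lo) by lia.
by apply: P3; have := idx_lt a; lia.
Qed.

Lemma odd_cyc0 : 0 < q -> odd_perm (cyc 0) = ~~ odd q.
Proof.
move=> q0; set s := cyc 0.
have all_in : forall a, a \in porbit s (av 0).
  move=> a0; apply: (@cyc_closed 0 (fun a => a \in porbit s (av 0)) (av 0)) => //.
  - by rewrite porbit_id.
  - move=> a Ha; rewrite -eq_porbit_mem in Ha; rewrite -(eqP Ha).
    by have := mem_porbit s 1 a; rewrite expg1.
rewrite /odd_perm; have -> : porbits s = [set porbit s (av 0)].
  apply/setP => P; rewrite inE; apply/imsetP/eqP => [[x _ ->]|->].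
    by apply/eqP; rewrite eq_porbit_mem.
  by exists (av 0).
by rewrite cards1 addbT.
Qed.
End Cyc.


Section Design.
Variables (A : finType) (n : nat) (d : A).
Hypothesis hA : 1 < #|A|.
Hypothesis hn : 1 < n.
Local Notation T := {ffun 'I_n -> A}.
Local Open Scope group_scope.

Definition a0 := av d 0.
Definition a1 := av d 1.
Definition a2 := av d 2.
Definition sgm := cyc d 0.
Definition sgm' := cyc d 1.
Definition i0 : 'I_n := Ordinal (ltnW hn).
Definition i1 : 'I_n := Ordinal hn.
Definition P0 : T := [ffun _ => a0].

Lemma a01 : a0 != a1.
Proof. by apply/eqP => /av_inj; have h := ltnW hA; move=> /(_ h hA). Qed.
Lemma sig_a0 : sgm a0 = a1.
Proof. by rewrite /sgm cycE /a0 idx_av ?(ltnW hA) // /cycn /= hA. Qed.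
Lemma sgm'_a0 : sgm' a0 = a0.
Proof. by rewrite /sgm' cycE /a0 idx_av ?(ltnW hA) // /cycn /=. Qed.
Lemma idx_a0 a : (a == a0) = (idx a == 0).
Proof.
apply/eqP/eqP => [->|h]; first by rewrite /a0 idx_av // (ltnW hA).
by rewrite -(av_idx d a) h.
Qed.

Lemma closed_sig (B : pred A) b0 : B b0 -> (forall a, B a -> B (sgm a)) -> forall a, B a.
Proof. by move=> Bb H a; apply: (@cyc_closed _ d 0 B b0) => //; apply: ltnW. Qed.
Lemma closed_sig' (B : pred A) b0 : b0 != a0 -> B b0 ->
  (forall a, B a -> B (sgm' a)) -> forall a, a != a0 -> B a.
Proof.
move=> b0a Bb H a aa; apply: (@cyc_closed _ d 1 B b0) => //.
  by rewrite lt0n -idx_a0.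
by rewrite lt0n -idx_a0.
Qed.

Lemma i10 : i1 != i0. Proof. by []. Qed.

Section Layer.
Variable Phi : 'I_n -> T -> {perm A}.
Variable P : pred T.
Hypothesis Pg : forall j x, P x -> P (inst a0 j (Phi j) x).
Hypothesis Pgi : forall j x, P x -> P ((inst a0 j (Phi j))^-1 x).
Variable a : A.
Let w := upd P0 i0 a.
Hypothesis Hs : forall j (c : T), j != i0 -> c j = a0 -> c i0 = a -> c != w -> Phi j c = sgm.
Hypothesis Hw : forall j, j != i0 -> Phi j w = sgm \/ Phi j w = sgm'.

Lemma w_other k : k != i0 -> w k = a0.
Proof. by move=> k0; rewrite /w upd_other // ffunE. Qed.
Lemma neq_w (x : T) k : k != i0 -> x k != a0 -> x != w.
Proof. by move=> k0 xk; apply/eqP => E; move: xk; rewrite E w_other ?eqxx. Qed.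

Lemma line (u : T) j : u i0 = a -> u != w -> P u -> j != i0 ->
  forall b, upd u j b != w -> P (upd u j b).
Proof.
move=> ui0 uw Pu j0.
set r := upd u j a0.
have key : forall b, inst a0 j (Phi j) (upd u j b) = upd u j (Phi j r b).
  by move=> b; rewrite instE !upd_upd upd_same.
pose B := fun b => P (upd u j b).
have Bclosed : forall b, B b -> B (Phi j r b) by move=> b Bb; rewrite /B -key; apply: Pg.
have Bu : B (u j) by rewrite /B upd_id.
have rj : r j = a0 by rewrite upd_same.
have ri0 : r i0 = a by rewrite upd_other // eq_sym.
case: (eqVneq r w) => [rw|rw]; last first.
  move=> b _; apply: (closed_sig Bu); rewrite -(Hs j0 rj ri0 rw); exact: Bclosed.
case: (Hw j0) => Hw'.
  move=> b _; apply: (closed_sig Bu); rewrite -Hw' -rw; exact: Bclosed.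
have uj : u j != a0.
  by apply: contraNneq uw => e; rewrite -rw /r -e upd_id.
move=> b bw; case: (eqVneq b a0) => [e|ba].
  by move: bw; rewrite e -/r rw eqxx.
by apply: (closed_sig' uj Bu) => // c; rewrite -Hw' -rw; exact: Bclosed.
Qed.

Lemma layer (y z : T) : y i0 = a -> z i0 = a -> y != w -> z != w -> P y -> P z.
Proof.
move=> yi0 zi0 yw zw Py.
case: (pickP (fun j => (j != i0) && (z j != a0))) => [j1 /andP [j10 zj1]|H]; last first.
  move: zw; suff -> : z = w by rewrite eqxx.
  apply/ffunP => i; case: (eqVneq i i0) => [->|i0']; first by rewrite zi0 /w upd_same.
  by have := H i; rewrite i0' /= w_other // => /negbFE/eqP.
set u := upd y j1 (z j1).
have uj1 : u j1 = z j1 by rewrite upd_same.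
have Pu : P u by apply: line => //; apply: (neq_w j10); rewrite uj1.
have ui0 : u i0 = a by rewrite upd_other // eq_sym.
pose v m : T := [ffun i : 'I_n => if i < m then z i else u i].
have vj1 m : v m j1 = z j1 by rewrite ffunE uj1; case: ifP.
have vi0 m : v m i0 = a by rewrite ffunE zi0 ui0; case: ifP.
have Pv : forall m, m <= n -> P (v m).
  elim => [_|m IH mn].
    by have -> : v 0 = u by apply/ffunP => i; rewrite ffunE.
  have mn' : m < n by [].
  set jm : 'I_n := Ordinal mn'.
  have -> : v m.+1 = upd (v m) jm (z jm).
    apply/ffunP => i; rewrite !ffunE ltnS leq_eqVlt -val_eqE /=.
    case: (eqVneq i jm) => [->|ne]; first by rewrite /= eqxx.
    have -> : (nat_of_ord i == m) = false by move: ne; rewrite -val_eqE => /negbTE.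
    by [].
  case: (eqVneq jm i0) => [e|jm0].
    by rewrite e zi0 -{1}(vi0 m) upd_id; apply: IH; apply: ltnW.
  apply: line; rewrite ?vi0 //; first by apply: (neq_w j10); rewrite vj1.
    by apply: IH; apply: ltnW.
  apply: (neq_w j10); case: (eqVneq j1 jm) => [e|ne]; first by rewrite -e upd_same.
  by rewrite upd_other // vj1.
have -> : z = v n by apply/ffunP => i; rewrite ffunE ltn_ord.
exact: Pv.
Qed.

Lemma layer_w j : j != i0 -> Phi j w = sgm ->
  (forall z : T, z i0 = a -> z != w -> P z) -> P w.
Proof.
move=> j0 Hj Hall.
have E : inst a0 j (Phi j) w = upd w j a1.
  rewrite instE (_ : upd w j a0 = w); last by rewrite -(w_other j0) upd_id.
  by rewrite w_other // Hj sig_a0.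
rewrite -(permK (inst a0 j (Phi j)) w); apply: Pgi; rewrite E.
apply: Hall; first by rewrite upd_other ?[i0 == j]eq_sym // /w upd_same.
by apply: (neq_w j0); rewrite upd_same eq_sym a01.
Qed.
End Layer.
End Design.


Ltac tsolve := let w := fresh "w" in apply/permP => w; rewrite ?permM ?perm1 ?tpermE;
  repeat match goal with
  | |- context [?u == ?v] => is_var u; is_var v;
      case: (eqVneq u v) => [?|/eqP ?]; [subst|]; rewrite ?eqxx /=
  end; try congruence.

Section DesignA.
Variables (A : finType) (n : nat) (d : A).
Hypothesis hA : 1 < #|A|.
Hypothesis hn : 1 < n.
Local Notation T := {ffun 'I_n -> A}.
Local Open Scope group_scope.
Local Notation a0 := (a0 d).
Local Notation a1 := (a1 d).
Local Notation a2 := (a2 d).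
Local Notation sgm := (sgm d).
Local Notation sgm' := (sgm' d).
Local Notation i0 := (i0 hn).
Local Notation i1 := (i1 hn).
Local Notation P0 := (P0 n d).

Lemma neq_at (x y : T) k : x k != y k -> x != y.
Proof. by apply: contraNneq => ->. Qed.
Lemma P0E i : P0 i = a0. Proof. by rewrite ffunE. Qed.
Lemma updP0 i : upd P0 i a0 = P0.
Proof. by rewrite -{1}(P0E i) upd_id. Qed.
Lemma upd_comm (x : T) i j b c : i != j -> upd (upd x i b) j c = upd (upd x j c) i b.
Proof.
move=> ij; apply/ffunP => k; rewrite !ffunE.
by case: eqP => [ki|]; case: eqP => [kj|] //; move: ij; rewrite -ki -kj eqxx.
Qed.
Lemma i01 : i0 != i1. Proof. by []. Qed.

Definition E1 := upd P0 i0 a1.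

Definition PhiA (j : 'I_n) (c : T) : {perm A} :=
  if j == i0 then
    (if c == P0 then tperm a0 a1
     else if (c == upd P0 i1 (c i1)) && (c i1 != a1) then c3 a0 a1 (c i1) else 1)
  else if j == i1 then (if c == E1 then sgm' else sgm)
  else (if c == P0 then sgm' else sgm).

Definition gA (k : 'I_n) := inst a0 k (PhiA k).

Lemma c3_cube (a b c : A) : a != b -> a != c -> b != c -> c3 a b c ^+ 3 = 1.
Proof.
move=> /eqP ab /eqP ac /eqP bc; rewrite !expgS expg0 mulg1 /c3; tsolve.
Qed.

Lemma gA_seed : gA i0 ^+ 3 = tperm P0 E1.
Proof.
rewrite /gA instX.
have -> : inst a0 i0 (fun c => PhiA i0 c ^+ 3) = liftp a0 i0 P0 (tperm a0 a1).
  apply/permP => x; rewrite !instE; congr (upd _ _ (fun_of_perm _ _)).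
  rewrite /PhiA eqxx; case: eqP => cP.
    by rewrite !expgS expg0 mulg1 !mulgA tperm2 mul1g.
  case: ifP => [/andP [/eqP E H]|_]; last by rewrite expg1n.
  apply: c3_cube; rewrite ?a01 // 1?eq_sym //.
  by apply/eqP => e; apply: cP; rewrite E e updP0.
by rewrite lift_tperm ?P0E // updP0.
Qed.

Lemma gAE j x : gA j x = upd x j (PhiA j (upd x j a0) (x j)).
Proof. exact: instE. Qed.
Lemma PhiA_j j c : j != i0 ->
  PhiA j c = if j == i1 then (if c == E1 then sgm' else sgm) else (if c == P0 then sgm' else sgm).
Proof. by rewrite /PhiA => /negbTE ->. Qed.
Lemma E1_i0 : E1 i0 = a1. Proof. by rewrite upd_same. Qed.
Lemma E1_other i : i != i0 -> E1 i = a0. Proof. by move=> ii; rewrite upd_other // P0E. Qed.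
Lemma a10 : a1 != a0. Proof. by rewrite eq_sym a01. Qed.
Lemma i10' : i1 != i0. Proof. by []. Qed.

Lemma PhiA_i0b b : b != a0 -> b != a1 -> PhiA i0 (upd P0 i1 b) = c3 a0 a1 b.
Proof.
move=> b0 b1; rewrite /PhiA eqxx.
have -> : (upd P0 i1 b == P0) = false.
  by apply/negbTE; apply: (@neq_at _ _ i1); rewrite upd_same P0E.
by rewrite upd_same eqxx b1.
Qed.
Lemma c3_0 b : b != a0 -> b != a1 -> c3 a0 a1 b a0 = a1.
Proof. by move=> b0 b1; rewrite /c3 permM tpermL tpermD ?a01. Qed.
Lemma c3_1 b : c3 a0 a1 b a1 = b.
Proof. by rewrite /c3 permM tpermR tpermL. Qed.
Lemma upd0 (x : T) i : x i = a0 -> upd x i a0 = x.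
Proof. by move=> xi; rewrite -{1}xi upd_id. Qed.

Lemma reachA (P : pred T) : (forall j x, P x -> P (gA j x)) ->
  (forall j x, P x -> P ((gA j)^-1 x)) -> P P0 -> P E1 ->
  (2 < #|A|) || (2 < n) -> forall x, P x.
Proof.
move=> Pg Pgi PP0 PE1 hqn.
have L0 : forall z : T, z i0 = a0 -> P z.
  move=> z zi0; case: (eqVneq z P0) => [->//|zP0].
  have Hs : forall j (c : T), j != i0 -> c j = a0 -> c i0 = a0 ->
      c != upd P0 i0 a0 -> PhiA j c = sgm.
    move=> j c j0 cj ci0 cw; rewrite PhiA_j //.
    have -> : (c == E1) = false by apply/negbTE; apply: (@neq_at _ _ i0); rewrite ci0 E1_i0 a01.
    by rewrite updP0 in cw; rewrite (negbTE cw); case: ifP.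
  have Hw : forall j, j != i0 -> PhiA j (upd P0 i0 a0) = sgm \/ PhiA j (upd P0 i0 a0) = sgm'.
    move=> j j0; rewrite PhiA_j // updP0 eqxx.
    by case: ifP => _; [case: ifP => _|]; auto.
  have y1 : gA i1 P0 = upd P0 i1 a1.
    by rewrite gAE updP0 PhiA_j // eqxx; rewrite (_ : (P0 == E1) = false) ?P0E ?sig_a0 //;
      apply/negbTE; apply: (@neq_at _ _ i0); rewrite P0E E1_i0 a01.
  apply: (layer hA Pg Hs Hw (y := upd P0 i1 a1)) => //.
  - by rewrite upd_other // P0E.
  - by rewrite updP0; apply: (@neq_at _ _ i1); rewrite upd_same P0E a10.
  - by rewrite updP0.
  - by rewrite -y1; apply: Pg.
have updr : forall (x : T) i, x i = a0 -> upd x i a0 = x.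
  by move=> x i xi; rewrite -{1}xi upd_id.
have L1 : forall z : T, z i0 = a1 -> P z.
  have Hs : forall j (c : T), j != i0 -> c j = a0 -> c i0 = a1 ->
      c != upd P0 i0 a1 -> PhiA j c = sgm.
    move=> j c j0 cj ci0 cw; rewrite PhiA_j //.
    have -> : (c == P0) = false by apply/negbTE; apply: (@neq_at _ _ i0); rewrite ci0 P0E a10.
    by rewrite -/E1 in cw; rewrite (negbTE cw); case: ifP.
  have Hw : forall j, j != i0 -> PhiA j (upd P0 i0 a1) = sgm \/ PhiA j (upd P0 i0 a1) = sgm'.
    move=> j j0; rewrite PhiA_j // -/E1 eqxx.
    by case: ifP => _; [|case: ifP => _]; auto.
  have [y [yi0 yw Py]] : exists y : T, [/\ y i0 = a1, y != E1 & P y].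
    case/orP: hqn => [hq|h2].
      set x := upd P0 i1 a2.
      have a2q : 2 < #|A| := hq.
      have a20 : a2 != a0 by apply/eqP => /av_inj; move=> /(_ a2q (ltnW (ltnW a2q))).
      have a21 : a2 != a1 by apply/eqP => /av_inj; move=> /(_ a2q (ltnW a2q)).
      have xi0 : x i0 = a0 by rewrite upd_other // P0E.
      have Px : P x by apply: L0.
      exists (gA i0 x); split; last exact: Pg.
      - by rewrite gAE upd_same upd0 // xi0 PhiA_i0b // c3_0.
      - apply: (@neq_at _ _ i1); rewrite gAE upd_other // upd_same E1_other //.
    set i2 : 'I_n := Ordinal h2.
    have i20 : i2 != i0 by [].
    have i21 : i2 != i1 by [].
    exists (gA i2 E1); split; last exact: Pg.
    - by rewrite gAE upd_other // E1_i0.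
    - apply: (@neq_at _ _ i2); rewrite gAE upd_same E1_other // updr ?E1_other //.
      rewrite PhiA_j // (negbTE i21).
      have -> : (E1 == P0) = false by apply/negbTE; apply: (@neq_at _ _ i0); rewrite E1_i0 P0E a10.
      by rewrite (sig_a0 d hA) a10.
  move=> z zi0; case: (eqVneq z E1) => [->//|zw].
  exact: (layer hA Pg Hs Hw yi0 zi0 yw zw Py).
have Lb : forall b, b != a0 -> b != a1 -> forall z : T, z i0 = b -> P z.
  move=> b b0 b1.
  have Hsig : forall j (c : T), j != i0 -> c i0 = b -> PhiA j c = sgm.
    move=> j c j0 ci0; rewrite PhiA_j //.
    have -> : (c == P0) = false by apply/negbTE; apply: (@neq_at _ _ i0); rewrite ci0 P0E.
    have -> : (c == E1) = false by apply/negbTE; apply: (@neq_at _ _ i0); rewrite ci0 E1_i0.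
    by case: ifP.
  have Hs : forall j (c : T), j != i0 -> c j = a0 -> c i0 = b ->
      c != upd P0 i0 b -> PhiA j c = sgm.
    by move=> j c j0 _ ci0 _; apply: Hsig.
  have Hw : forall j, j != i0 -> PhiA j (upd P0 i0 b) = sgm \/ PhiA j (upd P0 i0 b) = sgm'.
    by move=> j j0; left; apply: Hsig; rewrite ?upd_same.
  set x := upd (upd P0 i1 b) i0 a1.
  have Px : P x by apply: L1; rewrite upd_same.
  have y_def : gA i0 x = upd (upd P0 i1 b) i0 b.
    rewrite gAE /x upd_upd upd_same upd_upd upd0 ?upd_other ?P0E //.
    by rewrite PhiA_i0b // c3_1.
  have Py : P (upd (upd P0 i1 b) i0 b) by rewrite -y_def; apply: Pg.
  have yw : upd (upd P0 i1 b) i0 b != upd P0 i0 b.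
    apply: (@neq_at _ _ i1); rewrite (@upd_other _ _ _ _ _ i1) // upd_same.
    by rewrite upd_other // P0E.
  have Hall : forall z : T, z i0 = b -> z != upd P0 i0 b -> P z.
    move=> z zi0 zw; apply: (layer hA Pg Hs Hw _ zi0 yw zw Py).
    by rewrite upd_same.
  move=> z zi0; case: (eqVneq z (upd P0 i0 b)) => [->|zw]; last exact: Hall.
  apply: (layer_w hA Pgi (j := i1)) => //.
  by apply: Hsig; rewrite ?upd_same.
move=> x; case: (eqVneq (x i0) a0) => [|x0]; first exact: L0.
case: (eqVneq (x i0) a1) => [|x1]; first exact: L1.
exact: (Lb _ x0 x1).
Qed.

Definition GA := <<[set gA k | k : 'I_n]>>%G.
Lemma gA_in k : gA k \in GA. Proof. by rewrite mem_gen // imset_f. Qed.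

Lemma designA : (2 < #|A|) || (2 < n) -> GA = [set: {perm T}] :> {set _}.
Proof.
move=> hqn; apply: (@SX_final _ _ P0).
have E1S : E1 \in SX GA P0 by rewrite inE -gA_seed groupX // gA_in.
have wit : forall j, exists2 w, w \in SX GA P0 & gA j w \in SX GA P0.
  move=> j; case: (eqVneq j i0) => [->|j0].
    exists P0; first exact: SX_p.
    by rewrite gAE updP0 P0E /PhiA !eqxx tpermL.
  case: (eqVneq j i1) => [->|j1].
    exists E1 => //; rewrite gAE upd0 ?E1_other // PhiA_j // !eqxx.
    by rewrite (sgm'_a0 d hA) upd0 ?E1_other.
  exists P0; first exact: SX_p.
  by rewrite gAE updP0 PhiA_j // (negbTE j1) eqxx P0E (sgm'_a0 d hA) updP0 SX_p.
apply: (reachA (P := fun x => x \in SX GA P0)) => //; last exact: SX_p.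
  move=> j x Px; case: (wit j) => w Sw Sgw.
  exact: (SX_prop (gA_in j) Sw Sgw Px).
move=> j x Px; case: (wit j) => w Sw Sgw.
apply: (SX_prop (groupVr (gA_in j)) Sgw _ Px).
by rewrite permK.
Qed.
End DesignA.




Lemma xor_const (I : finType) (D : {pred I}) b :
  \big[addb/false]_(i in D) b = odd #|D| && b.
Proof. by rewrite big_const; elim: #|D| => //= k ->; case: b; case: (odd k). Qed.

Lemma xor_eq (I : finType) (D : {set I}) e :
  \big[addb/false]_(c in D) (c == e) = (e \in D).
Proof.
case: (boolP (e \in D)) => eD.
  rewrite (bigD1 e) //= eqxx big1 // => c /andP [_ /negbTE] //.
by rewrite big1 // => c cD; apply/negbTE; apply: contraNneq eD => <-.
Qed.

Section DesignB.
Variables (A : finType) (n : nat) (d : A).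
Hypothesis hA3 : 2 < #|A|.
Hypothesis hn : 1 < n.
Let hA : 1 < #|A| := ltnW hA3.
Local Notation T := {ffun 'I_n -> A}.
Local Open Scope group_scope.
Local Notation a0 := (a0 d).
Local Notation a1 := (a1 d).
Local Notation a2 := (a2 d).
Local Notation sgm := (sgm d).
Local Notation sgm' := (sgm' d).
Local Notation i0 := (i0 hn).
Local Notation i1 := (i1 hn).
Local Notation P0 := (P0 n d).
Local Notation E1 := (E1 d hn).
Local Notation P0E := (P0E d).
Local Notation updP0 := (updP0 d).
Local Notation a10 := (a10 d hA).
Local Notation a01 := (a01 d hA).

Definition E2 := upd P0 i0 a2.
Lemma a20 : a2 != a0.
Proof. by apply/eqP => /av_inj; move=> /(_ hA3 (ltnW (ltnW hA3))). Qed.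
Lemma a21 : a2 != a1.
Proof. by apply/eqP => /av_inj; move=> /(_ hA3 (ltnW hA3)). Qed.

Definition PhiB (j : 'I_n) (c : T) : {perm A} :=
  if j == i0 then
    (if c == P0 then c3 a0 a1 a2
     else if c == upd P0 i1 (c i1) then
       tperm a0 (c i1) * (if (c i1 == a1) || (c i1 == a2) then 1 else tperm a1 a2)
     else 1)
  else (if (c == E1) || (c == E2) then sgm' else sgm).

Definition gB (k : 'I_n) := inst a0 k (PhiB k).

Lemma gBE j x : gB j x = upd x j (PhiB j (upd x j a0) (x j)).
Proof. exact: instE. Qed.
Lemma PhiB_j j c : j != i0 -> PhiB j c = if (c == E1) || (c == E2) then sgm' else sgm.
Proof. by rewrite /PhiB => /negbTE ->. Qed.
Lemma PhiB_i0b b : b != a0 ->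
  PhiB i0 (upd P0 i1 b) = tperm a0 b * (if (b == a1) || (b == a2) then 1 else tperm a1 a2).
Proof.
move=> b0; rewrite /PhiB eqxx.
have -> : (upd P0 i1 b == P0) = false.
  by apply/negbTE; apply: (@neq_at _ _ _ _ i1); rewrite upd_same P0E.
by rewrite upd_same eqxx.
Qed.

Lemma gB_seed : gB i0 ^+ 4 = c3 P0 E1 E2.
Proof.
rewrite /gB instX.
have -> : inst a0 i0 (fun c => PhiB i0 c ^+ 4) =
    liftp a0 i0 P0 (tperm a0 a1) * liftp a0 i0 P0 (tperm a0 a2).
  rewrite instM; apply/permP => x; rewrite !instE; congr (upd _ _ (fun_of_perm _ _)).
  set c := upd x i0 a0.
  rewrite /PhiB eqxx; case: eqP => cP.
    have e : c3 a0 a1 a2 ^+ 4 = c3 a0 a1 a2 * c3 a0 a1 a2 ^+ 3 by rewrite expgS.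
    by rewrite e c3_cube ?a01 ?mulg1 // 1?eq_sym ?a20 ?a21.
  rewrite mulg1; case: ifP => [/eqP E|_]; last by rewrite expg1n.
  have b0 : c i1 != a0 by apply/eqP => e; apply: cP; rewrite E e updP0.
  have sq : forall p : {perm A}, p * p = 1 -> p ^+ 4 = 1.
    by move=> p pp; rewrite !expgS expg0 mulg1 !mulgA pp mul1g pp.
  apply: sq; case: ifP => [_|/norP [b1 b2]]; first by rewrite mulg1 tperm2.
  move: b0 b1 b2 a10 a20 a21; set b := c i1.
  move=> /eqP b0 /eqP b1 /eqP b2 /eqP h10 /eqP h20 /eqP h21.
  move: (a0) (a1) (a2) b b0 b1 b2 h10 h20 h21 => u0 u1 u2 v ? ? ? ? ? ?.
  tsolve.
by rewrite -/(c3 _ _ _) !lift_tperm ?P0E // updP0.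
Qed.


Lemma oddR (j : 'I_n) : odd #|Rj a0 j| -> odd #|A|.
Proof.
have E : #|Rj a0 j| = foldr muln 1%N [seq #|(if i == j then pred1 a0 else predT)| | i : 'I_n].
  rewrite -card_family; apply: eq_card => c; rewrite inE; apply/eqP/familyP => [Ec i|H].
    by case: eqP => [->|]; rewrite ?inE ?Ec.
  by have := H j; rewrite eqxx inE => /eqP.
have oddfold : forall s, odd (foldr muln 1%N s) = all odd s.
  by elim => //= x s IH; rewrite oddM IH.
rewrite E oddfold => /allP H.
have [k kj] : exists k, k != j.
  case: (eqVneq j i0) => [->|]; [exists i1 | exists i0]; by rewrite // eq_sym.
have := H _ (map_f _ (mem_enum _ k)); rewrite (negbTE kj).
by rewrite cardT enumT.
Qed.


Lemma oddPhiB0 c :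
  odd_perm (PhiB i0 c) = (c == upd P0 i1 a1) (+) (c == upd P0 i1 a2).
Proof.
rewrite /PhiB eqxx; case: eqP => [->|cP].
  have h : forall b, b != a0 -> (P0 == upd P0 i1 b) = false.
    by move=> b b0; apply/negbTE; apply: (@neq_at _ _ _ _ i1); rewrite upd_same P0E eq_sym.
  by rewrite odd_c3 ?a01 ?h // ?a10 ?a20 // eq_sym a20.
case: ifP => [/eqP E|F].
  have Eb : forall a, (c == upd P0 i1 a) = (c i1 == a).
    by move=> a; rewrite {1}E (inj_eq (@upd_inj _ _ _ _)).
  have b0 : c i1 != a0 by apply/eqP => e; apply: cP; rewrite E e updP0.
  rewrite !Eb odd_mul_tperm eq_sym b0 /=.
  have a12 : (a1 == a2) = false by rewrite eq_sym (negbTE a21).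
  case: (eqVneq (c i1) a1) => [->|b1]; first by rewrite odd_perm1 a12.
  by case: eqP => _ /=; rewrite ?odd_perm1 ?odd_tperm ?a12.
rewrite odd_perm1.
have h : forall a, (c == upd P0 i1 a) = false.
  move=> a; apply/negbTE/eqP => e; move: F; rewrite {2}e upd_same -e eqxx //.
by rewrite !h.
Qed.

Lemma oddPhiBj j c : j != i0 ->
  odd_perm (PhiB j c) = odd_perm sgm (+)
    (((c == E1) && (odd_perm sgm' (+) odd_perm sgm)) (+)
     ((c == E2) && (odd_perm sgm' (+) odd_perm sgm))).
Proof.
move=> j0; rewrite PhiB_j //.
have E12 : E1 != E2 by apply: (@neq_at _ _ _ _ i0); rewrite !upd_same eq_sym a21.
case: (eqVneq c E1) => [->|c1]; first rewrite (negbTE E12) /=.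
  by case: (odd_perm sgm); case: (odd_perm sgm').
case: (eqVneq c E2) => [_|c2] /=; last by rewrite addbF.
by case: (odd_perm sgm); case: (odd_perm sgm').
Qed.

Lemma xor_eq_and (I : finType) (D : {set I}) e y :
  \big[addb/false]_(c in D) ((c == e) && y) = (e \in D) && y.
Proof.
case: y; last by rewrite andbF big1 // => c _; rewrite andbF.
by rewrite andbT -xor_eq; apply: eq_bigr => c _; rewrite andbT.
Qed.

Lemma odd_gB j : odd_perm (gB j) = false.
Proof.
rewrite /gB odd_inst.
case: (eqVneq j i0) => [->|j0].
  under eq_bigr => c _ do rewrite oddPhiB0.
  rewrite big_split /= !xor_eq !inE !upd_other ?P0E ?eqxx //.
under eq_bigr => c _ do rewrite (oddPhiBj c j0).
have oc : odd_perm sgm = ~~ odd #|A| by apply: odd_cyc0; apply: ltnW.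
move: oc; set x := odd_perm sgm; set y := odd_perm sgm' (+) x => oc.
rewrite big_split /= xor_const big_split /= !xor_eq_and !inE !upd_other ?P0E ?eqxx //=.
rewrite addbb addbF oc.
by case: (boolP (odd #|Rj a0 j|)) => // /oddR ->.
Qed.



Lemma neq_updi0 (c : T) a a' : c i0 = a -> c != upd P0 i0 a -> c != upd P0 i0 a'.
Proof.
move=> ci0 cw; apply/eqP => e; move/eqP: cw; apply.
by rewrite -ci0 e upd_same.
Qed.

Lemma reachB (P : pred T) : (forall j x, P x -> P (gB j x)) ->
  (forall j x, P x -> P ((gB j)^-1 x)) -> P P0 -> P E1 -> P E2 -> forall x, P x.
Proof.
move=> Pg Pgi PP0 PE1 PE2.
have L0 : forall z : T, z i0 = a0 -> P z.
  move=> z zi0; case: (eqVneq z P0) => [->//|zP0].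
  have Hsig : forall j (c : T), j != i0 -> c i0 = a0 -> PhiB j c = sgm.
    move=> j c j0 ci0; rewrite PhiB_j //.
    have -> : (c == E1) = false by apply/negbTE; apply: (@neq_at _ _ _ _ i0); rewrite ci0 upd_same a01.
    have -> : (c == E2) = false by apply/negbTE; apply: (@neq_at _ _ _ _ i0); rewrite ci0 upd_same eq_sym a20.
    by [].
  have Hs : forall j (c : T), j != i0 -> c j = a0 -> c i0 = a0 ->
      c != upd P0 i0 a0 -> PhiB j c = sgm by move=> j c j0 _ ci0 _; exact: Hsig.
  have Hw : forall j, j != i0 -> PhiB j (upd P0 i0 a0) = sgm \/ PhiB j (upd P0 i0 a0) = sgm'.
    by move=> j j0; left; apply: Hsig; rewrite ?upd_same.
  have y1 : gB i1 P0 = upd P0 i1 a1.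
    by rewrite gBE updP0 Hsig ?P0E // (sig_a0 d hA).
  apply: (layer hA Pg Hs Hw (y := upd P0 i1 a1)) => //.
  - by rewrite upd_other // P0E.
  - by rewrite updP0; apply: (@neq_at _ _ _ _ i1); rewrite upd_same P0E a10.
  - by rewrite updP0.
  - by rewrite -y1; apply: Pg.
have Lsp : forall a, a != a0 -> (a == a1) || (a == a2) -> P (upd P0 i0 a) ->
    forall z : T, z i0 = a -> P z.
  move=> a aa0 a12 Pw.
  have Hs : forall j (c : T), j != i0 -> c j = a0 -> c i0 = a ->
      c != upd P0 i0 a -> PhiB j c = sgm.
    move=> j c j0 _ ci0 cw; rewrite PhiB_j //.
    by rewrite (negbTE (neq_updi0 _ ci0 cw)) (negbTE (neq_updi0 _ ci0 cw)).
  have Hw : forall j, j != i0 -> PhiB j (upd P0 i0 a) = sgm \/ PhiB j (upd P0 i0 a) = sgm'.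
    move=> j j0; right; rewrite PhiB_j //.
    by case/orP: a12 => /eqP ->; rewrite eqxx ?orbT.
  have y_def : gB i0 (upd P0 i1 a) = upd (upd P0 i1 a) i0 a.
    rewrite gBE upd0 ?upd_other ?P0E // PhiB_i0b // a12 mulg1.
    by rewrite tpermL.
  have Py : P (upd (upd P0 i1 a) i0 a) by rewrite -y_def; apply: Pg; apply: L0; rewrite upd_other ?P0E.
  have yw : upd (upd P0 i1 a) i0 a != upd P0 i0 a.
    apply: (@neq_at _ _ _ _ i1); rewrite (@upd_other _ _ _ _ _ i1) // upd_same.
    by rewrite upd_other // P0E.
  move=> z zi0; case: (eqVneq z (upd P0 i0 a)) => [->//|zw].
  by apply: (layer hA Pg Hs Hw _ zi0 yw zw Py); rewrite upd_same.
have Lb : forall b, b != a0 -> b != a1 -> b != a2 -> forall z : T, z i0 = b -> P z.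
  move=> b b0 b1 b2.
  have Hsig : forall j (c : T), j != i0 -> c i0 = b -> PhiB j c = sgm.
    move=> j c j0 ci0; rewrite PhiB_j //.
    have -> : (c == E1) = false by apply/negbTE; apply: (@neq_at _ _ _ _ i0); rewrite ci0 upd_same.
    have -> : (c == E2) = false by apply/negbTE; apply: (@neq_at _ _ _ _ i0); rewrite ci0 upd_same.
    by [].
  have Hs : forall j (c : T), j != i0 -> c j = a0 -> c i0 = b ->
      c != upd P0 i0 b -> PhiB j c = sgm by move=> j c j0 _ ci0 _; exact: Hsig.
  have Hw : forall j, j != i0 -> PhiB j (upd P0 i0 b) = sgm \/ PhiB j (upd P0 i0 b) = sgm'.
    by move=> j j0; left; apply: Hsig; rewrite ?upd_same.
  have y_def : gB i0 (upd P0 i1 b) = upd (upd P0 i1 b) i0 b.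
    rewrite gBE upd0 ?upd_other ?P0E // PhiB_i0b // (negbTE b1) (negbTE b2) /=.
    by rewrite permM tpermL tpermD // eq_sym ?a21.
  have Py : P (upd (upd P0 i1 b) i0 b) by rewrite -y_def; apply: Pg; apply: L0; rewrite upd_other ?P0E.
  have yw : upd (upd P0 i1 b) i0 b != upd P0 i0 b.
    apply: (@neq_at _ _ _ _ i1); rewrite (@upd_other _ _ _ _ _ i1) // upd_same.
    by rewrite upd_other // P0E.
  have Hall : forall z : T, z i0 = b -> z != upd P0 i0 b -> P z.
    by move=> z zi0 zw; apply: (layer hA Pg Hs Hw _ zi0 yw zw Py); rewrite upd_same.
  move=> z zi0; case: (eqVneq z (upd P0 i0 b)) => [->|zw]; last exact: Hall.
  apply: (layer_w hA Pgi (j := i1)) => //.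
  by apply: Hsig; rewrite ?upd_same.
move=> x; case: (eqVneq (x i0) a0) => [|x0]; first exact: L0.
case: (eqVneq (x i0) a1) => [|x1]; first by apply: Lsp; rewrite ?a10 ?eqxx.
case: (eqVneq (x i0) a2) => [|x2]; first by apply: Lsp; rewrite ?a20 ?eqxx ?orbT.
exact: (Lb _ x0 x1 x2).
Qed.


Lemma E1def : E1 = upd P0 i0 a1. Proof. by []. Qed.

Definition GB := <<[set gB k | k : 'I_n]>>%G.
Lemma gB_in k : gB k \in GB. Proof. by rewrite mem_gen // imset_f. Qed.
Lemma gB_Alt k : gB k \in 'Alt_T. Proof. by rewrite Alt_even odd_gB. Qed.

Lemma designB : GB = 'Alt_T :> {set _}.
Proof.
apply/eqP; rewrite eqEsubset; apply/andP; split.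
  by rewrite gen_subG; apply/subsetP => s /imsetP [k _ ->]; apply: gB_Alt.
have pp' : P0 != E1 by apply: (@neq_at _ _ _ _ i0); rewrite upd_same P0E a01.
apply: (AY_final pp').
have E2S : E2 \in AY GB P0 E1 by rewrite !inE -gB_seed groupX ?gB_in ?orbT.
have E12 : E1 != E2 by apply: (@neq_at _ _ _ _ i0); rewrite !upd_same eq_sym a21.
have wit : forall j, exists a b, [/\ a \in AY GB P0 E1, b \in AY GB P0 E1, a != b,
    gB j a \in AY GB P0 E1 & gB j b \in AY GB P0 E1].
  move=> j; case: (eqVneq j i0) => [->|j0].
    exists P0, E1; split => //; first exact: AY_p.
    - exact: AY_p'.
    - rewrite gBE updP0 P0E /PhiB !eqxx /c3 permM tpermL tpermD ?a01 ?a21 //.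
      exact: AY_p'.
    - rewrite E1def gBE !upd_upd updP0 upd_same /PhiB !eqxx /c3 permM tpermR tpermL; exact: E2S.
  have fix1 : forall e, e \in [:: E1; E2] -> gB j e = e.
    move=> e ein; have [a ea] : exists a, e = upd P0 i0 a.
      by move: ein; rewrite !inE => /orP [] /eqP ->; eexists.
    subst e; have ej : (upd P0 i0 a) j = a0 by rewrite upd_other ?P0E.
    rewrite gBE ej (upd0 ej) PhiB_j // (_ : _ || _ = true) ?(sgm'_a0 d hA) ?(upd0 ej) //.
    by move: ein; rewrite !inE => ->.
  exists E1, E2; split => //; first exact: AY_p'.
  - by rewrite fix1; [exact: AY_p' | rewrite !inE eqxx].
  - by rewrite fix1 // !inE eqxx orbT.
apply: (reachB (P := fun x => x \in AY GB P0 E1)) => //.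
- move=> j x Px; case: (wit j) => a [b [Sa Sb ab Sga Sgb]].
  exact: (AY_prop pp' (gB_in j) Sa Sb ab Sga Sgb Px).
- move=> j x Px; case: (wit j) => a [b [Sa Sb ab Sga Sgb]].
  apply: (AY_prop pp' (groupVr (gB_in j)) Sga Sgb _ _ _ Px); rewrite ?permK //.
  by rewrite (inj_eq perm_inj).
- exact: AY_p.
- exact: AY_p'.
Qed.

End DesignB.

Theorem theorem1 (A : finType) (n : nat) :
  2 <= #|A| -> 2 <= n ->
  (~~ ((#|A| == 2) && (n == 2)) ->
     exists g : 'I_n -> {perm {ffun 'I_n -> A}},
       (forall k, instruction (g k)) /\
       <<[set g k | k : 'I_n]>>%g = [set: {perm {ffun 'I_n -> A}}])
  /\
  (3 <= #|A| ->
     exists g : 'I_n -> {perm {ffun 'I_n -> A}},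
       (forall k, instruction (g k)) /\
       (forall k, g k \in (Alt {ffun 'I_n -> A})) /\
       <<[set g k | k : 'I_n]>>%g = (Alt {ffun 'I_n -> A})).
Proof.
move=> hA hn.
have d : A := enum_val (Ordinal (ltnW hA)).
split.
  move=> hqn.
  have hqn' : (2 < #|A|) || (2 < n).
    move: hqn; rewrite negb_and => /orP [h|h]; apply/orP; [left|right];
      by rewrite ltn_neqAle eq_sym h ?hA ?hn.
  exists (gA d hn); split.
    by move=> k; exists k => x i ik; apply: inst_other.
  exact: (designA d hA hn hqn').
move=> hA3; exists (gB d hn); split.
  by move=> k; exists k => x i ik; apply: inst_other.
split; first exact: gB_Alt.
exact: (designB d hA3 hn).
Qed.
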